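(* Let $\ell$ be a prime, $\mathcal{C}$ a category, and $u\colon R\to S$ a homomorphism of pseudo-rings in the category of presheaves on $\mathcal{C}$ with values in graded $\mathbb{F}_\ell$-vector spaces. Let $m\ge1$ be an integer such that for every object $i$ of $\mathcal{C}$ and every $a\in\ker u_i$, $a^m=0$. Then for every $x\in\ker\varprojlim_{\mathcal{C}}u$, $x^m=0$. If moreover $n\ge0$ is an integer such that for every object $i$ of $\mathcal{C}$ and every $b\in S_i$, $b^{\ell^n}\in\mathrm{Im}\,u_i$, then for every $y\in\varprojlim_{\mathcal{C}}S$ and every integer $N\ge n+\log_\ell(m)$, $y^{\ell^N}\in\mathrm{Im}\,\varprojlim_{\mathcal{C}}u$. In particular, if $u$ is a uniform $F$-injection (resp. uniform $F$-isomorphism), so is $\varprojlim_{\mathcal{C}}u$.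
   Context: A pseudo-ring in the (symmetric monoidal, with Koszul sign rule) category of presheaves of graded $\mathbb{F}_\ell$-vector spaces on $\mathcal{C}$ is a presheaf $R$ of graded $\mathbb{F}_\ell$-algebras, associative but not necessarily unital; a homomorphism $u$ is a compatible family of multiplicative graded linear maps $u_i\colon R_i\to S_i$. $\varprojlim_{\mathcal{C}}R$ is a graded pseudo-algebra. $u$ is a uniform $F$-injection (resp. uniform $F$-surjection) if there is $n\ge0$ such that for every object $i$ and every element $a$ of $\ker u_i$ (resp. of $S_i$), $a^{\ell^n}=0$ (resp. $a^{\ell^n}\in\mathrm{Im}\,u_i$); a uniform $F$-isomorphism is both. *)

(* Defs.v *)
From HB Require Import structures.
From mathcomp Require Import all_boot all_algebra.
Set Implicit Arguments. Unset Strict Implicit. Unset Printing Implicit Defensive.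
Import GRing.Theory.
Local Open Scope ring_scope.

Record category := Category {
  Ob : Type;
  Hom : Ob -> Ob -> Type;
  idm : forall i, Hom i i;
  comp : forall i j k, Hom j k -> Hom i j -> Hom i k;   (* comp g f = g o f *)
  comp1m : forall i j (f : Hom i j), comp (idm j) f = f;
  compm1 : forall i j (f : Hom i j), comp f (idm i) = f;
  compA : forall i j k l (h : Hom k l) (g : Hom j k) (f : Hom i j),
      comp h (comp g f) = comp (comp h g) f }.

(* ---------- non-unital powers: ppow mul a n = a^n for n >= 1 ---------- *)
Definition ppow {T : Type} (mul : T -> T -> T) (a : T) (n : nat) : T :=
  iter n.-1 (mul a) a.

(* Koszul sign (-1)^(p q) for degrees p q : int *)
Definition koszul_sign (p q : int) : bool := odd (absz p) && odd (absz q).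

(* ---------- Z-graded, graded-commutative (Koszul sign rule), associative,
   not necessarily unital F_l-algebras (= pseudo-rings in graded F_l-vector
   spaces). The carrier is the direct sum of the homogeneous pieces;
   gproj d is the projection onto the degree-d piece. ---------- *)
Record gpalg (l : nat) := GPAlg {
  gcar :> lmodType 'F_l;
  gmul : gcar -> gcar -> gcar;
  gproj : int -> {linear gcar -> gcar};
  gmulA : associative gmul;
  gmulDl : forall a b c, gmul (a + b) c = gmul a c + gmul b c;
  gmulDr : forall a b c, gmul a (b + c) = gmul a b + gmul a c;
  gmulZl : forall (k : 'F_l) a b, gmul (k *: a) b = k *: gmul a b;
  gmulZr : forall (k : 'F_l) a b, gmul a (k *: b) = k *: gmul a b;
  gproj_proj : forall d e a, gproj d (gproj e a) = if d == e then gproj e a else 0;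
  gdecomp : forall a, exists s : seq int, uniq s /\ a = \sum_(d <- s) gproj d a;
  gmul_graded : forall p q a b,
      gproj (p + q) (gmul (gproj p a) (gproj q b)) = gmul (gproj p a) (gproj q b);
  gmul_comm : forall p q a b,
      gmul (gproj q b) (gproj p a) =
      (if koszul_sign p q then -1 else 1) *: gmul (gproj p a) (gproj q b) }.

Arguments gmul {l} _ _ _.
Arguments gproj {l} _ _.

Definition gphom (l : nat) (A B : gpalg l) (f : A -> B) : Prop :=
  [/\ forall a b, f (a + b) = f a + f b,
      forall (k : 'F_l) a, f (k *: a) = k *: f a,
      forall a b, f (gmul A a b) = gmul B (f a) (f b) &
      forall d a, f (gproj A d a) = gproj B d (f a)].

Record presheaf (l : nat) (C : category) := Presheaf {
  psh :> Ob C -> gpalg l;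
  res : forall i j, Hom i j -> psh j -> psh i;
  res_hom : forall i j (f : Hom i j), gphom (res f);
  res_id : forall i x, res (idm i) x = x;
  res_comp : forall i j k (g : Hom j k) (f : Hom i j) x,
      res (comp g f) x = res f (res g x) }.

Arguments res {l C} _ {i j} _ _.

Section Presheaves.
Variables (l : nat) (C : category).

Definition pshom (R S : presheaf l C) (u : forall i, R i -> S i) : Prop :=
  (forall i, gphom (u i)) /\
  (forall i j (f : Hom i j) x, u i (res R f x) = res S f (u j x)).

(* ---------- the limit over C (computed in graded F_l-vector spaces):
   compatible families of finitely many total degrees, with componentwise
   operations ---------- *)
Definition limit_elt (R : presheaf l C) (x : forall i, R i) : Prop :=
  (forall i j (f : Hom i j), res R f (x j) = x i) /\
  (exists s : seq int, forall i, x i = \sum_(d <- s) gproj (R i) d (x i)).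

Definition lim_zero (R : presheaf l C) : forall i, R i := fun i => 0.

Definition lim_mul (R : presheaf l C) (x y : forall i, R i) : forall i, R i :=
  fun i => gmul (R i) (x i) (y i).

Definition lim_map (R S : presheaf l C) (u : forall i, R i -> S i)
  (x : forall i, R i) : forall i, S i := fun i => u i (x i).

Definition unif_F_inj (R S : presheaf l C) (u : forall i, R i -> S i) : Prop :=
  exists n : nat, forall i (a : R i), u i a = 0 -> ppow (gmul (R i)) a (l ^ n) = 0.

Definition unif_F_surj (R S : presheaf l C) (u : forall i, R i -> S i) : Prop :=
  exists n : nat, forall i (b : S i),
    exists a : R i, u i a = ppow (gmul (S i)) b (l ^ n).

Definition unif_F_iso (R S : presheaf l C) (u : forall i, R i -> S i) : Prop :=
  unif_F_inj u /\ unif_F_surj u.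

Definition lim_unif_F_inj (R S : presheaf l C) (u : forall i, R i -> S i) : Prop :=
  exists n : nat, forall x, limit_elt x -> lim_map u x = lim_zero S ->
    ppow (@lim_mul R) x (l ^ n) = lim_zero R.

Definition lim_unif_F_surj (R S : presheaf l C) (u : forall i, R i -> S i) : Prop :=
  exists n : nat, forall y, limit_elt y ->
    exists z, limit_elt z /\ lim_map u z = ppow (@lim_mul S) y (l ^ n).

Definition lim_unif_F_iso (R S : presheaf l C) (u : forall i, R i -> S i) : Prop :=
  lim_unif_F_inj u /\ lim_unif_F_surj u.

End Presheaves.

(* Main.v *)
Require Import Defs.
From HB Require Import structures.
From mathcomp Require Import all_boot all_algebra zify.
From Stdlib Require Import FunctionalExtensionality ClassicalEpsilon.
Set Implicit Arguments. Unset Strict Implicit. Unset Printing Implicit Defensive.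
Import GRing.Theory.
Local Open Scope ring_scope.

Lemma gmul0r l (A : gpalg l) b : gmul A 0 b = 0.
Proof. have h := @gmulDl _ A 0 0 b; rewrite addr0 in h. by apply: (addrI (gmul A 0 b)); rewrite addr0 -h. Qed.
Lemma gmulr0 l (A : gpalg l) b : gmul A b 0 = 0.
Proof. have h := @gmulDr _ A b 0 0; rewrite addr0 in h. by apply: (addrI (gmul A b 0)); rewrite addr0 -h. Qed.

Definition unitz (l : nat) (A : gpalg l) := ('F_l * A)%type.
HB.instance Definition _ l (A : gpalg l) := GRing.Zmodule.on (unitz A).

Definition umul l (A : gpalg l) (x y : unitz A) : unitz A :=
  (x.1 * y.1, x.1 *: y.2 + y.1 *: x.2 + gmul A x.2 y.2).
Definition uone l (A : gpalg l) : unitz A := (1, 0).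

Lemma umulA l (A : gpalg l) : associative (@umul l A).
Proof.
move=> [k1 a1] [k2 a2] [k3 a3]; rewrite /umul /=; congr (_, _); first by rewrite mulrA.
rewrite !scalerDr !gmulDl !gmulDr !gmulZl !gmulZr !scalerA gmulA.
rewrite [k3 * k1]mulrC [k3 * k2]mulrC.
rewrite -!addrA; congr (_ + _); rewrite !addrA; congr (_ + _).
set P := (_ *: a2); set Q := (k1 *: _); set R := (_ *: a1); set S := (k2 *: _); set T := (k3 *: _).
rewrite -!addrA; congr (_ + _); rewrite !addrA.
by rewrite addrAC; congr (_ + _); rewrite [Q + R]addrC addrAC.
Qed.

Lemma umul1r l (A : gpalg l) : left_id (uone A) (@umul l A).
Proof. by move=> [k a]; rewrite /umul /uone /= mul1r scale1r scaler0 gmul0r !addr0. Qed.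
Lemma umulr1 l (A : gpalg l) : right_id (uone A) (@umul l A).
Proof. by move=> [k a]; rewrite /umul /uone /= mulr1 scale1r scaler0 gmulr0 add0r addr0. Qed.
Lemma umulDl l (A : gpalg l) : left_distributive (@umul l A) +%R.
Proof.
move=> [k1 a1] [k2 a2] [k3 a3]; rewrite /umul /=; congr (_, _); first by rewrite mulrDl.
rewrite scalerDl scalerDr gmulDl.
set P := k1 *: a3; set Q := k2 *: a3; set R := k3 *: a1; set S := k3 *: a2.
set T := gmul A a1 a3; set U := gmul A a2 a3.
rewrite !addrA; congr (_ + _). rewrite addrAC; congr (_ + _).
rewrite -!addrA; congr (_ + _); rewrite addrC -!addrA; try congr (_ + _).
all: try by rewrite addrC.
Qed.
Lemma umulDr l (A : gpalg l) : right_distributive (@umul l A) +%R.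
Proof.
move=> [k1 a1] [k2 a2] [k3 a3]; rewrite /umul /=; congr (_, _); first by rewrite mulrDr.
rewrite scalerDl scalerDr gmulDr.
set P := k1 *: a2; set Q := k1 *: a3; set R := k2 *: a1; set S := k3 *: a1.
set T := gmul A a1 a2; set U := gmul A a1 a3.
rewrite !addrA; congr (_ + _). rewrite addrAC; congr (_ + _).
rewrite -!addrA; congr (_ + _); rewrite addrC -!addrA; try congr (_ + _).
all: try by rewrite addrC.
Qed.
Lemma uone_neq0 l (A : gpalg l) : uone A != 0.
Proof. by rewrite /uone xpair_eqE oner_eq0. Qed.

HB.instance Definition _ l (A : gpalg l) :=
  GRing.Zmodule_isNzRing.Build (unitz A) (@umulA l A) (@umul1r l A) (@umulr1 l A)
    (@umulDl l A) (@umulDr l A) (@uone_neq0 l A).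

Definition iota l (A : gpalg l) (a : A) : unitz A := (0, a).

Lemma iotaD l (A : gpalg l) a b : iota (a + b) = iota a + iota b :> unitz A.
Proof. by rewrite /iota; congr (_, _); rewrite addr0. Qed.

Lemma iotaM l (A : gpalg l) a b : iota a * iota b = iota (gmul A a b) :> unitz A.
Proof. by rewrite /iota {1}/GRing.mul /= /umul /= mulr0 !scale0r !add0r. Qed.

Lemma ppowS l (A : gpalg l) (a : A) n : ppow (gmul A) a n.+2 = gmul A a (ppow (gmul A) a n.+1).
Proof. by []. Qed.

Lemma iotaX l (A : gpalg l) (a : A) n : iota a ^+ n.+1 = iota (ppow (gmul A) a n.+1) :> unitz A.
Proof.
elim: n => [|n IH]; first by rewrite expr1.
by rewrite exprS IH iotaM.
Qed.

Lemma iotaX' l (A : gpalg l) (a : A) n : (0 < n)%N -> iota a ^+ n = iota (ppow (gmul A) a n) :> unitz A.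
Proof. by case: n => // n _; rewrite iotaX. Qed.

Lemma gfrob l (hl : prime l) (A : gpalg l) (x y : A) :
  gmul A x y = gmul A y x -> ppow (gmul A) (x + y) l = ppow (gmul A) x l + ppow (gmul A) y l.
Proof.
move=> cxy.
have pc : l \in [pchar (unitz A)].
  rewrite inE hl /= pairMnE /=.
  by rewrite -[(1 : 'F_l) *+ l]/(l%:R) pchar_Fp_0 // mul0rn.
have c : GRing.comm (iota x) (iota y) by rewrite /GRing.comm !iotaM cxy.
have := pFrobenius_autD_comm pc c; rewrite !pFrobenius_autE.
rewrite -iotaD !iotaX' ?prime_gt0 // -iotaD => h.
by have := congr1 snd h.
Qed.

Lemma gmul_suml l (A : gpalg l) I (r : seq I) (P : pred I) (F : I -> A) b :
  gmul A (\sum_(i <- r | P i) F i) b = \sum_(i <- r | P i) gmul A (F i) b.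
Proof.
exact: (big_morph (fun x => gmul A x b) (fun x y => gmulDl x y b) (gmul0r b)).
Qed.
Lemma gmul_sumr l (A : gpalg l) I (r : seq I) (P : pred I) (F : I -> A) b :
  gmul A b (\sum_(i <- r | P i) F i) = \sum_(i <- r | P i) gmul A b (F i).
Proof.
exact: (big_morph (fun x => gmul A b x) (fun x y => gmulDr b x y) (gmulr0 b)).
Qed.

Lemma comm_sums l (A : gpalg l) I J (r : seq I) (P : pred I) (F : I -> A)
   (t : seq J) (Q : pred J) (G : J -> A) :
  (forall i j, P i -> Q j -> gmul A (F i) (G j) = gmul A (G j) (F i)) ->
  gmul A (\sum_(i <- r | P i) F i) (\sum_(j <- t | Q j) G j) =
  gmul A (\sum_(j <- t | Q j) G j) (\sum_(i <- r | P i) F i).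
Proof.
move=> h; rewrite !gmul_suml.
under eq_bigr do rewrite gmul_sumr.
under [RHS]eq_bigr do rewrite gmul_sumr.
rewrite [RHS]exchange_big /=.
by apply: eq_bigr => i Pi; apply: eq_bigr => j Qj; apply: h.
Qed.

Lemma anti_sums l (A : gpalg l) I J (r : seq I) (P : pred I) (F : I -> A)
   (t : seq J) (Q : pred J) (G : J -> A) :
  (forall i j, P i -> Q j -> gmul A (G j) (F i) = - gmul A (F i) (G j)) ->
  gmul A (\sum_(j <- t | Q j) G j) (\sum_(i <- r | P i) F i) =
  - gmul A (\sum_(i <- r | P i) F i) (\sum_(j <- t | Q j) G j).
Proof.
move=> h; rewrite !gmul_suml.
under eq_bigr do rewrite gmul_sumr.
under [in RHS]eq_bigr do rewrite gmul_sumr.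
rewrite [LHS]exchange_big /= -sumrN.
by apply: eq_bigr => i Pi; rewrite -sumrN; apply: eq_bigr => j Qj; apply: h.
Qed.

Lemma comm_addr l (A : gpalg l) (x y1 y2 : A) :
  gmul A x y1 = gmul A y1 x -> gmul A x y2 = gmul A y2 x ->
  gmul A x (y1 + y2) = gmul A (y1 + y2) x.
Proof. by move=> h1 h2; rewrite gmulDr gmulDl h1 h2. Qed.

Lemma even_central l (A : gpalg l) (a y : A) (s : seq int) :
  let e := \sum_(d <- s | ~~ odd `|d|%N) gproj A d a in
  gmul A e y = gmul A y e.
Proof.
move=> e; have [t [_ ht]] := gdecomp y; rewrite ht /e.
apply: comm_sums => p q hp _.
by rewrite [RHS]gmul_comm /koszul_sign (negPf hp) /= scale1r.
Qed.

Lemma ppow_gt l (A : gpalg l) (a : A) n : ppow (gmul A) a n.+3 = gmul A (gmul A a a) (ppow (gmul A) a n.+1).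
Proof.
elim: n => [|n IH]; first by rewrite ppowS /= gmulA.
by rewrite ppowS IH ppowS !gmulA.
Qed.

Lemma nil2 l (A : gpalg l) (x : A) n : gmul A x x = 0 -> (2 < n)%N -> ppow (gmul A) x n = 0.
Proof. by move=> h; case: n => [|[|[|n]]] // _; rewrite ppow_gt h gmul0r. Qed.

Lemma odd_anti l (A : gpalg l) (a b : A) (s t : seq int) :
  gmul A (\sum_(d <- t | odd `|d|%N) gproj A d b) (\sum_(d <- s | odd `|d|%N) gproj A d a) =
  - gmul A (\sum_(d <- s | odd `|d|%N) gproj A d a) (\sum_(d <- t | odd `|d|%N) gproj A d b).
Proof.
apply: anti_sums => p q hp hq.
by rewrite gmul_comm /koszul_sign hp hq scaleN1r.
Qed.

Lemma gfrob_all l (hl : prime l) (A : gpalg l) (a b : A) :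
  ppow (gmul A) (a + b) l = ppow (gmul A) a l + ppow (gmul A) b l.
Proof.
have [sa [_ ha]] := gdecomp a; have [sb [_ hb]] := gdecomp b.
have [l2|l2] := eqVneq l 2%N.
  have h2 : (2%:R : 'F_l) == 0 by rewrite -(dvdn_pcharf (pchar_Fp hl)) l2.
  have m1 : (-1 : 'F_l) = 1.
    by apply/eqP; rewrite -subr_eq0 -opprD oppr_eq0.
  apply: gfrob => //; rewrite ha hb; apply: comm_sums => p q _ _.
  by rewrite [RHS]gmul_comm; case: ifP => _; rewrite ?m1 scale1r.
have two_ne : (2%:R : 'F_l) != 0.
  rewrite -(dvdn_pcharf (pchar_Fp hl)); apply/negP => d.
  move: (dvdn_leq (isT : (0 < 2)%N) d) (prime_gt1 hl) l2; lia.
have sq0 (x : A) : x = - x -> x = 0.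
  move/eqP; rewrite -subr_eq0 opprK -mulr2n -scaler_nat scaler_eq0 (negPf two_ne) /=.
  by move/eqP.
set ea := \sum_(d <- sa | ~~ odd `|d|%N) gproj A d a.
set oa := \sum_(d <- sa | odd `|d|%N) gproj A d a.
set eb := \sum_(d <- sb | ~~ odd `|d|%N) gproj A d b.
set ob := \sum_(d <- sb | odd `|d|%N) gproj A d b.
have Ea : a = ea + oa by rewrite [LHS]ha (bigID (fun d : int => ~~ odd `|d|%N)) /=; congr (_ + _); apply: eq_bigl => d; rewrite negbK.
have Eb : b = eb + ob by rewrite [LHS]hb (bigID (fun d : int => ~~ odd `|d|%N)) /=; congr (_ + _); apply: eq_bigl => d; rewrite negbK.
have oaa : gmul A oa oa = 0 by apply: sq0; apply: odd_anti.
have obb : gmul A ob ob = 0 by apply: sq0; apply: odd_anti.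
have l3 : (2 < l)%N by move: (prime_gt1 hl) l2; lia.
have fa : ppow (gmul A) a l = ppow (gmul A) ea l.
  rewrite {1}Ea gfrob ?(nil2 oaa) ?addr0 //; exact: even_central.
have fb : ppow (gmul A) b l = ppow (gmul A) eb l.
  rewrite {1}Eb gfrob ?(nil2 obb) ?addr0 //; exact: even_central.
have OO : gmul A (oa + ob) (oa + ob) = 0.
  rewrite !gmulDl !gmulDr oaa obb add0r addr0 odd_anti.
  by rewrite addNr.
rewrite fa fb Ea Eb addrACA gfrob ?(nil2 OO) ?addr0 //.
  by rewrite gfrob //; exact: even_central.
by rewrite gmulDl !even_central -gmulDr.
Qed.

Definition deg_in l (A : gpalg l) (s : seq int) (w : A) := forall d, d \notin s -> gproj A d w = 0.

Lemma sum_if_eq (V : zmodType) (T : seq int) (d : int) (x : V) : uniq T ->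
  \sum_(e <- T) (if e == d then x else 0) = if d \in T then x else 0.
Proof.
elim: T => [|e T IH] /=; first by rewrite big_nil.
case/andP => eT uT; rewrite big_cons IH // inE.
rewrite [e == d]eq_sym; case: (eqVneq d e) => [->|_] /=; last by rewrite add0r.
by rewrite (negPf eT) addr0.
Qed.

Lemma deg_sum l (A : gpalg l) (T : seq int) (w : A) : deg_in T (\sum_(d <- T) gproj A d w).
Proof.
move=> e eT; rewrite linear_sum big1_seq // => d /andP[_ dT].
rewrite gproj_proj; case: eqP => // ed; by move: eT; rewrite ed dT.
Qed.

Lemma deg_undup l (A : gpalg l) T (w : A) : deg_in T w -> deg_in (undup T) w.
Proof. by move=> h d; rewrite mem_undup; apply: h. Qed.

Lemma deg_decomp l (A : gpalg l) T (w : A) : uniq T -> deg_in T w ->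
  w = \sum_(d <- T) gproj A d w.
Proof.
move=> uT hT; have [s [us hs]] := gdecomp w.
rewrite {2}hs; under eq_bigr do rewrite linear_sum.
under eq_bigr do under eq_bigr do rewrite gproj_proj.
rewrite exchange_big /=.
under eq_bigr do rewrite sum_if_eq //.
rewrite {1}hs; apply: eq_bigr => d _.
by case: ifP => // /negbT dT; rewrite hT.
Qed.

Lemma deg_mul l (A : gpalg l) T T' (a b : A) : deg_in T a -> deg_in T' b ->
  deg_in [seq d + e | d <- T, e <- T'] (gmul A a b).
Proof.
move=> ha hb f hf.
rewrite (deg_decomp (undup_uniq T) (deg_undup ha)) (deg_decomp (undup_uniq T') (deg_undup hb)).
rewrite gmul_suml linear_sum big1_seq // => d /andP[_ dT].
rewrite gmul_sumr linear_sum big1_seq // => e /andP[_ eT].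
rewrite -(gmul_graded d e) gproj_proj.
case: (eqVneq f (d + e)) => // fde.
exfalso; move/negP: hf; apply; rewrite fde.
rewrite mem_undup in dT; rewrite mem_undup in eT.
exact: (allpairs_f (fun x y : int => x + y) dT eT).
Qed.

Fixpoint dpow (T : seq int) (n : nat) : seq int :=
  if n is n'.+1 then [seq d + e | d <- T, e <- dpow T n'] else T.

Lemma deg_pow l (A : gpalg l) T (a : A) n : deg_in T a -> deg_in (dpow T n) (ppow (gmul A) a n.+1).
Proof.
move=> ha; elim: n => [|n IH] //.
by rewrite ppowS; apply: deg_mul.
Qed.

Lemma ppow_hom l (A B : gpalg l) (f : A -> B) (a : A) n :
  (forall x y, f (gmul A x y) = gmul B (f x) (f y)) ->
  f (ppow (gmul A) a n) = ppow (gmul B) (f a) n.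
Proof.
move=> hf; rewrite /ppow; case: n => [|n] //=; elim: n => [|n IH] //=.
by rewrite hf IH.
Qed.

Lemma iota_inj l (A : gpalg l) (a b : A) : iota a = iota b :> unitz A -> a = b.
Proof. by move=> h; have := congr1 snd h. Qed.

Lemma ppow_mul l (A : gpalg l) (a : A) p q : (0 < p)%N -> (0 < q)%N ->
  ppow (gmul A) (ppow (gmul A) a p) q = ppow (gmul A) a (p * q).
Proof.
move=> hp hq; apply: iota_inj.
by rewrite -!iotaX' ?muln_gt0 ?hp ?hq // exprM.
Qed.

Lemma ppow_le0 l (A : gpalg l) (a : A) m M : (0 < m)%N -> (m <= M)%N ->
  ppow (gmul A) a m = 0 -> ppow (gmul A) a M = 0.
Proof.
move=> hm hmM h; apply: iota_inj.
rewrite -iotaX' ?(leq_trans hm hmM) // -(subnK hmM) exprD (iotaX' _ hm) h.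
by rewrite /iota mulr0.
Qed.

Lemma frob_iter l (hl : prime l) (A : gpalg l) (a b : A) k :
  ppow (gmul A) (a + b) (l ^ k) = ppow (gmul A) a (l ^ k) + ppow (gmul A) b (l ^ k).
Proof.
have lp := prime_gt0 hl.
elim: k => [|k IH]; first by [].
by rewrite expnSr -!ppow_mul ?expn_gt0 ?lp // IH gfrob_all.
Qed.

Lemma addf0 (V W : zmodType) (f : V -> W) : (forall a b, f (a + b) = f a + f b) -> f 0 = 0.
Proof. move=> hf; have := hf 0 0; rewrite addr0 => h; apply: (addrI (f 0)); by rewrite addr0 -h. Qed.

Lemma addfB (V W : zmodType) (f : V -> W) a b : (forall a b, f (a + b) = f a + f b) -> f (a - b) = f a - f b.
Proof. move=> hf; have := hf (a - b) b; rewrite subrK => ->; by rewrite addrK. Qed.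

Lemma addf_sum (V W : zmodType) (f : V -> W) I (r : seq I) (P : pred I) (F : I -> V) :
  (forall a b, f (a + b) = f a + f b) -> f (\sum_(i <- r | P i) F i) = \sum_(i <- r | P i) f (F i).
Proof. move=> hf; exact: (big_morph f hf (addf0 hf)). Qed.

Lemma lim_ppow l C (R : presheaf l C) x n i :
  ppow (@lim_mul _ _ R) x n i = ppow (gmul (R i)) (x i) n.
Proof.
rewrite /ppow; case: n => [|n] //=; elim: n => [|n IH] //=.
by rewrite {1}/lim_mul IH.
Qed.

Lemma partA l (hl : prime l) (C : category)
  (R S : presheaf l C) (u : forall i, R i -> S i) (hu : pshom u) (m : nat) :
  (1 <= m)%N ->
     (forall i (a : R i), u i a = 0 -> ppow (gmul (R i)) a m = 0) ->
     (forall x, limit_elt x -> lim_map u x = lim_zero S ->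
        ppow (@lim_mul _ _ R) x m = lim_zero R) /\
     (forall n : nat,
        (forall i (b : S i), exists a : R i, u i a = ppow (gmul (S i)) b (l ^ n)) ->
        forall y, limit_elt y ->
        forall N : nat, (n <= N)%N -> (m <= l ^ (N - n))%N ->
          exists z, limit_elt z /\ lim_map u z = ppow (@lim_mul _ _ S) y (l ^ N)).
Proof.
move=> hm hker; have [uh ucomm] := hu; split.
  move=> x _ hx; apply: functional_extensionality_dep => i.
  rewrite lim_ppow; apply: hker.
  exact: (congr1 (fun g => g i) hx).
move=> n hs y [yc [s ys]] N hnN hmN.
set k := (N - n)%N; have hN : N = (n + k)%N by rewrite subnKC.
have lp := prime_gt0 hl.
have [a ha] : exists a : forall i, R i, forall i, u i (a i) = ppow (gmul (S i)) (y i) (l ^ n).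
  exists (fun i => proj1_sig (constructive_indefinite_description _ (hs i (y i)))).
  by move=> i; exact: proj2_sig (constructive_indefinite_description _ (hs i (y i))).
set T := undup (dpow s (l ^ N).-1).
have degY i : deg_in T (ppow (gmul (S i)) (y i) (l ^ N)).
  apply: deg_undup.
  have hyi : deg_in s (y i) by rewrite (ys i); apply: deg_sum.
  have := @deg_pow _ _ s (y i) (l ^ N).-1 hyi.
  by rewrite prednK // expn_gt0 lp.
pose z := fun i => \sum_(d <- T) gproj (R i) d (ppow (gmul (R i)) (a i) (l ^ k)).
have uz i : u i (z i) = ppow (gmul (S i)) (y i) (l ^ N).
  case: (uh i) => uadd _ umul uproj.
  rewrite /z addf_sum //.
  under eq_bigr do rewrite uproj (ppow_hom _ _ umul) ha ppow_mul ?expn_gt0 ?lp // -expnD -hN.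
  by symmetry; apply: deg_decomp (undup_uniq _) (degY i).
have zc (i j : Ob C) (f : Defs.Hom i j) : res R f (z j) = z i.
  case: (res_hom R f) => radd _ rmul rproj.
  rewrite /z addf_sum //; apply: eq_bigr => d _; rewrite rproj (ppow_hom _ _ rmul).
  congr (gproj _ d _).
  set r := res R f (a j).
  have -> : r = a i + (r - a i) by rewrite addrC subrK.
  rewrite frob_iter // [X in _ + X = _](@ppow_le0 _ _ _ m) ?addr0 //.
  apply: hker; case: (uh i) => uadd _ _ _.
  rewrite addfB // /r ucomm ha.
  case: (res_hom S f) => _ _ smul _.
  by rewrite (ppow_hom _ _ smul) yc ha subrr.
exists z; split.
  split; first by move=> i j f; apply: zc.
  exists T => i; apply: deg_decomp; first exact: undup_uniq.
  by rewrite /z; apply: deg_sum.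
apply: functional_extensionality_dep => i.
by rewrite lim_ppow; apply: uz.
Qed.

Unset Implicit Arguments.
Set Strict Implicit.

Theorem lemma10p13 (l : nat) (hl : prime l) (C : category)
  (R S : presheaf l C) (u : forall i, R i -> S i) (hu : pshom u) :
  (forall m : nat, (1 <= m)%N ->
     (forall i (a : R i), u i a = 0 -> ppow (gmul (R i)) a m = 0) ->
     (forall x, limit_elt x -> lim_map u x = lim_zero S ->
        ppow (@lim_mul _ _ R) x m = lim_zero R) /\
     (forall n : nat,
        (forall i (b : S i), exists a : R i, u i a = ppow (gmul (S i)) b (l ^ n)) ->
        forall y, limit_elt y ->
        forall N : nat, (n <= N)%N -> (m <= l ^ (N - n))%N ->
          exists z, limit_elt z /\ lim_map u z = ppow (@lim_mul _ _ S) y (l ^ N)))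
  /\ (unif_F_inj u -> lim_unif_F_inj u)
  /\ (unif_F_iso u -> lim_unif_F_iso u).
Proof.
have lp := prime_gt0 hl.
have pos n : (1 <= l ^ n)%N by rewrite expn_gt0 lp.
split; first by move=> m hm hk; exact: partA.
split.
  case=> n hn; exists n => x hx hx0.
  exact: ((partA hl hu (pos n) hn).1 x hx hx0).
case=> [[ni hi] [ns hs]]; split.
  exists ni => x hx hx0.
  exact: ((partA hl hu (pos ni) hi).1 x hx hx0).
exists (ns + ni)%N => y hy.
apply: ((partA hl hu (pos ni) hi).2 ns hs y hy (ns + ni)%N (leq_addr _ _)).
by rewrite addKn leqnn.
Qed.
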